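(* Let $\lambda = \lambda(d)$ be a function with $\lambda(d) \le d$ for all $d$ and $\lambda(d) \to \infty$ as $d \to \infty$. For every $\varepsilon > 0$ there exists $d_0$ such that the following holds for every $d \ge d_0$: if $G$ is a graph with $n$ vertices, average degree at most $d$, and at most $d^2 n / \lambda^3$ triangles (where $\lambda = \lambda(d)$), then $$\alpha(G) \ge (1 - \varepsilon) \frac{n \log \lambda}{d}.$$ (In the paper's asymptotic notation: $\alpha(G) \ge (1+o(1)) \frac{n \log \lambda}{d}$ as $d \to \infty$.)
   Context: $\alpha(G)$ denotes the independence number of $G$ (the size of a largest independent set), and $\log$ is the natural logarithm. *)

(* Defs.v *)
From HB Require Import structures.
From mathcomp Require Import all_boot all_order all_algebra.
From mathcomp Require Import all_classical all_reals all_analysis.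
Set Implicit Arguments. Unset Strict Implicit. Unset Printing Implicit Defensive.
Import Order.TTheory GRing.Theory Num.Theory.

Definition simple_graph (T : finType) (e : rel T) : Prop :=
  symmetric e /\ irreflexive e.

Definition num_edges (T : finType) (e : rel T) : nat :=
  #|[set S : {set T} | (#|S| == 2) && [forall x in S, forall y in S, (x != y) ==> e x y]]|.

Definition num_triangles (T : finType) (e : rel T) : nat :=
  #|[set S : {set T} | (#|S| == 3) && [forall x in S, forall y in S, (x != y) ==> e x y]]|.

Definition independent (T : finType) (e : rel T) (S : {set T}) : bool :=
  [forall x in S, forall y in S, ~~ e x y].

Definition alpha (T : finType) (e : rel T) : nat :=
  \max_(S : {set T} | independent e S) #|S|.

(* Main.v *)
Require Import Defs.
From HB Require Import structures.
From mathcomp Require Import all_boot all_order all_algebra.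
From mathcomp Require Import all_classical all_reals all_analysis.
Import Order.TTheory GRing.Theory Num.Theory.
Import numFieldNormedType.Exports.
From mathcomp Require Import ring lra zify.

Set Implicit Arguments. Unset Strict Implicit. Unset Printing Implicit Defensive.
Local Open Scope ring_scope.
Section PartI.
Variable R : realType.

Lemma mono_deriv (f f' : R -> R) (a b : R) : a <= b ->
  (forall x, a <= x <= b -> is_derive x 1 f (f' x)) ->
  (forall x, a < x < b -> 0 <= f' x) -> f a <= f b.
Proof.
move=> ab hd hpos.
apply: (@ger0_derive1_le_cc R f a b) => //.
- move=> x; rewrite in_itv /= => /andP[h1 h2].
  have H := hd x; rewrite (ltW h1) (ltW h2) in H.
  by case: (H isT).
- move=> x; rewrite in_itv /= => /andP[h1 h2].
  have H := hd x _; rewrite (ltW h1) (ltW h2) in H.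
  have H2 := H isT.
  by rewrite derive1E derive_val; apply: hpos; rewrite h1 h2.
- apply: derivable_within_continuous => x; rewrite in_itv /= => /andP[h1 h2].
  by have := hd x; rewrite h1 h2 => /(_ isT) [].
- by rewrite in_itv /= lexx ab.
- by rewrite in_itv /= lexx ab.
Qed.

Lemma ln_lb (z : R) : 0 <= z -> z / (z + 1) <= ln (z + 1).
Proof.
move=> z0.
have hz1 : 0 < z + 1 by lra.
have h := @le_ln1Dx R (- (z / (z + 1))) _.
have e1 : 1 + - (z / (z + 1)) = (z + 1)^-1.
  by apply/eqP; rewrite -subr_eq0; apply/eqP; field; lra.
rewrite e1 lnV ?posrE // in h.
have : - (z / (z + 1)) > -1.
  rewrite ltrNl opprK ltr_pdivrMr //; lra.
by move=> /h; rewrite lerN2.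
Qed.

Lemma ln_ub (z : R) : 0 <= z -> ln (z + 1) <= z.
Proof. by move=> z0; rewrite addrC; apply: le_ln1Dx; lra. Qed.

Lemma d_lnS (z : R) : -1 < z -> is_derive z 1 (fun z => @ln R (z + 1)) (z+1)^-1.
Proof.
move=> hz.
have h1 : is_derive z 1 (fun x : R => x + 1) 1.
  by apply: is_derive_eq; rewrite addr0.
have h2 : is_derive (z+1) 1 (@ln R) (z+1)^-1 by apply: is_derive1_ln; lra.
have := @is_derive1_comp R (@ln R) (fun x => x + 1) z _ _ h2 h1.
by rewrite mulr1.
Qed.

Definition Qf (z : R) := 2 * (z+1)^+2 * ln (z+1) - 2 * z - 3 * z^+2.

Lemma Qf_ge0 (z : R) : 0 <= z -> 0 <= Qf z.
Proof.
move=> z0.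
have -> : 0 = Qf 0 by rewrite /Qf add0r ln1; ring.
apply: (@mono_deriv Qf (fun z => 4 * (z+1) * ln (z+1) - 4 * z)) => //.
- move=> x /andP[x0 _].
  have h2 := @d_lnS x ltac:(lra).
  rewrite /Qf; apply: is_derive_eq.
  rewrite /GRing.scale /=.
  field; lra.
- move=> x /andP[x0 _].
  have := @ln_lb x ltac:(lra).
  rewrite ler_pdivrMr; last lra.
  move=> h; nra.
Qed.

Definition rf (z : R) := z * (2 + z) - 2 * (z + 1) * ln (z + 1).

Lemma rf_ge0 (z : R) : 0 <= z -> 0 <= rf z.
Proof.
move=> z0.
have -> : 0 = rf 0 by rewrite /rf add0r ln1; ring.
apply: (@mono_deriv rf (fun z => 2 * z - 2 * ln (z+1))) => //.
- move=> x /andP[x0 _].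
  have h2 := @d_lnS x ltac:(lra).
  rewrite /rf; apply: is_derive_eq.
  rewrite /GRing.scale /=.
  field; lra.
- move=> x /andP[x0 _].
  have := @ln_ub x ltac:(lra).
  lra.
Qed.

Definition Fl (z : R) : R := if z == 0 then 1 else ln (z + 1) / z.
Definition Gl (z : R) : R := (z / (z + 1) - ln (z + 1)) / z ^+ 2.

Lemma dF (z : R) : 0 < z -> is_derive z 1 (fun z => @ln R (z + 1) / z) (Gl z).
Proof.
move=> z0.
have h2 := @d_lnS z ltac:(lra).
have h3 : is_derive z 1 (fun y : R => y^-1) (- z ^- 2 *: 1).
  apply: (@is_deriveV R id z 1 1); first lra.
apply: (is_derive_eq (is_deriveM h2 h3)).
rewrite /GRing.scale /= /Gl.
field; lra.
Qed.

Lemma dG (z : R) : 0 < z -> is_derive z 1 Gl (Qf z / ((z + 1)^+2 * z^+3)).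
Proof.
move=> z0.
have h2 := @d_lnS z ltac:(lra).
have hz : z != 0 by lra.
have hz1 : z + 1 != 0 by lra.
have hz2 : z ^+ 2 != 0 by rewrite expf_neq0.
rewrite /Gl; apply: is_derive_eq.
rewrite /GRing.scale /= /Qf.
field; lra.
Qed.

Lemma G_mono (x y : R) : 0 < x -> x <= y -> Gl x <= Gl y.
Proof.
move=> x0 xy.
apply: (@mono_deriv Gl (fun z => Qf z / ((z + 1)^+2 * z^+3))) => //.
- move=> t /andP[h1 _]; apply: dG; lra.
- move=> t /andP[h1 _].
  apply: divr_ge0; first by apply: Qf_ge0; lra.
  have t0 : 0 < t by lra.
  by apply: mulr_ge0; apply: exprn_ge0; lra.
Qed.

Lemma Fl_pos (z : R) : 0 < z -> Fl z = ln (z + 1) / z.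
Proof. by move=> z0; rewrite /Fl gt_eqF. Qed.

Lemma tangentF (z z0 : R) : 0 <= z -> 0 < z0 -> Fl z0 + Gl z0 * (z - z0) <= Fl z.
Proof.
move=> zge z0p.
have [->|zne] := eqVneq z 0.
  rewrite /Fl eqxx (gt_eqF z0p) /Gl.
  have := @rf_ge0 z0 (ltW z0p); rewrite /rf => h.
  have hz1 : 0 < z0 + 1 by lra.
  rewrite -subr_ge0.
  have -> : 1 - (ln (z0 + 1) / z0 + (z0 / (z0 + 1) - ln (z0 + 1)) / z0 ^+ 2 * (0 - z0))
     = (z0 * (2 + z0) - 2 * (z0 + 1) * ln (z0 + 1)) / (z0 * (z0 + 1)).
    field; lra.
  apply: divr_ge0 => //; nra.
have zp : 0 < z by lra.
rewrite !Fl_pos //.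
pose phi := fun t : R => ln (t + 1) / t - (ln (z0 + 1) / z0 + Gl z0 * (t - z0)).
have dphi : forall t : R, 0 < t -> is_derive t 1 phi (Gl t - Gl z0).
  move=> t tp; rewrite /phi.
  have h := @dF t tp.
  apply: is_derive_eq.
  rewrite /GRing.scale /=; ring.
have phi0 : phi z0 = 0 by rewrite /phi subrr mulr0 addr0 subrr.
rewrite -subr_ge0.
have -> : ln (z + 1) / z - (ln (z0 + 1) / z0 + Gl z0 * (z - z0)) = phi z by [].
have [zz0|zz0] := leP z0 z.
  rewrite -phi0.
  apply: (@mono_deriv phi (fun t => Gl t - Gl z0)) => //.
  - move=> t /andP[h1 _]; apply: dphi; lra.
  - move=> t /andP[h1 _]; rewrite subr_ge0; apply: G_mono; lra.
have : - phi z <= - phi z0.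
  apply: (@mono_deriv (fun t => - phi t) (fun t => - (Gl t - Gl z0))); first lra.
  - move=> t /andP[h1 _]; apply: is_deriveN; apply: dphi; lra.
  - move=> t /andP[h1 h2]; rewrite oppr_ge0 subr_le0; apply: G_mono; lra.
by rewrite phi0 oppr0 oppr_le0.
Qed.

Lemma Gl_le0 (z : R) : 0 < z -> Gl z <= 0.
Proof.
move=> z0; rewrite /Gl; apply: mulr_le0_ge0.
  by rewrite subr_le0; apply: ln_lb; lra.
by rewrite invr_ge0 exprn_ge0 //; lra.
Qed.

Lemma Fl_le1 (z : R) : 0 <= z -> Fl z <= 1.
Proof.
move=> z0; rewrite /Fl; case: eqP => // /eqP zn.
rewrite ler_pdivrMr; last lra.
by rewrite mul1r; apply: ln_ub.
Qed.

Lemma Fl_gt0 (z : R) : 0 < z -> 0 < Fl z.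
Proof.
move=> z0; rewrite Fl_pos //; apply: divr_gt0 => //.
by apply: ln_gt0; lra.
Qed.

Lemma FG_id (z : R) : 0 < z -> Fl z + z * Gl z = (z + 1)^-1.
Proof. move=> z0; rewrite Fl_pos // /Gl; field; lra. Qed.
End PartI.
Section Comb.
Variable R : realType.
Variable T : finType.
Implicit Types (A U W : {set T}).

Lemma sum_ind A W : \sum_(y in A) (if y \in W then 1 else 0 : R) = #|A :&: W|%:R.
Proof.
rewrite -big_mkcondr /= (eq_bigl (fun y => y \in A :&: W)); last by move=> y; rewrite inE.
by rewrite sumr_const.
Qed.

Lemma sum_sub W U (F : T -> R) : W \subset U ->
  \sum_(x in W) F x = \sum_(x in U) (if x \in W then F x else 0).
Proof.
move=> /fintype.subsetP WU; rewrite -big_mkcondr /=; apply: eq_bigl => x.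
by case xW: (x \in W); rewrite ?andbT ?andbF // WU.
Qed.

Lemma card_R A : (#|A|%:R : R) = \sum_(x in A) 1.
Proof. by rewrite sumr_const. Qed.

Lemma sum_sq_expand U (a : T -> R) (m : R) :
  \sum_(u in U) (a u - m) ^+ 2 =
  \sum_(u in U) a u ^+ 2 - 2 * m * \sum_(u in U) a u + m ^+ 2 * #|U|%:R.
Proof.
rewrite (eq_bigr (fun u => a u ^+ 2 + - (2 * m * a u) + m ^+ 2)); last first.
  by move=> u _; ring.
by rewrite !big_split /= sumrN -mulr_sumr sumr_const mulr_natr.
Qed.

Lemma cs_ineq U (a : T -> R) :
  (\sum_(u in U) a u) ^+ 2 <= #|U|%:R * \sum_(u in U) a u ^+ 2.
Proof.
have [U0|Upos] := eqVneq #|U| 0%N.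
  rewrite U0 mul0r.
  have -> : U = finset.set0 by apply/eqP; rewrite -cards_eq0 U0.
  by rewrite big_set0 expr0n.
set N : R := #|U|%:R.
have Np : 0 < N by rewrite /N ltr0n lt0n.
set S1 := \sum_(u in U) a u.
set S2 := \sum_(u in U) a u ^+ 2.
have H := sum_sq_expand U a (S1 / N).
have H0 : 0 <= \sum_(u in U) (a u - S1 / N) ^+ 2.
  by apply: sumr_ge0 => u _; apply: sqr_ge0.
rewrite H -/S1 -/S2 -/N in H0.
have E : S2 - 2 * (S1 / N) * S1 + (S1 / N) ^+ 2 * N = (N * S2 - S1 ^+ 2) / N.
  by field; rewrite lt0r_neq0.
rewrite E in H0.
rewrite -subr_ge0.
by rewrite pmulr_lge0 ?invr_gt0 // in H0.
Qed.
End Comb.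

Section Shearer.
Variables (R : realType) (T : finType) (e : rel T).
Hypotheses (esym : symmetric e) (eirr : irreflexive e).
Implicit Types (A U W : {set T}).

Definition ind (b : bool) : R := if b then 1 else 0.
Definition degU U x : R := \sum_(y in U) ind (e x y).
Definition DU U : R := \sum_(x in U) degU U x.
Definition tfree U := forall x y z, x \in U -> y \in U -> z \in U ->
  e x y -> e y z -> e x z -> False.
Definition Uv U v : {set T} := U :\: (v |: [set y | e v y]).

Lemma ind_ge0 b : 0 <= ind b. Proof. by case: b; rewrite /ind. Qed.
Lemma ind_le1 b : ind b <= 1. Proof. by case: b; rewrite /ind. Qed.

Lemma Uv_sub U v : Uv U v \subset U.
Proof. exact: subsetDl. Qed.

Lemma in_Uv U v y : (y \in Uv U v) = [&& y != v, ~~ e v y & y \in U].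
Proof. by rewrite /Uv !inE negb_or andbA. Qed.

Lemma Uv_card U v : v \in U -> (#|Uv U v| < #|U|)%N.
Proof.
move=> vU; rewrite (cardsD1 v U) vU add1n ltnS; apply: subset_leq_card.
apply/fintype.subsetP => y; rewrite in_Uv !inE => /and3P[-> _ ->]. by [].
Qed.

Lemma DU_ge0 U : 0 <= DU U.
Proof. by apply: sumr_ge0 => x _; apply: sumr_ge0 => y _; apply: ind_ge0. Qed.

Lemma deg_ge0 U x : 0 <= degU U x.
Proof. by apply: sumr_ge0 => y _; apply: ind_ge0. Qed.

Lemma tfree_sub U W : W \subset U -> tfree U -> tfree W.
Proof.
move=> /fintype.subsetP WU tU x y z xW yW zW; apply: tU; exact: WU.
Qed.

Lemma Uv_cardR U v : v \in U -> (#|Uv U v|%:R : R) = #|U|%:R - 1 - degU U v.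
Proof.
move=> vU.
have E : (#|U|%:R : R) = \sum_(y in U) (ind (y \in Uv U v) + ind (y \in [set v]) + ind (e v y)).
  rewrite card_R; apply: eq_bigr => y yU.
  rewrite in_Uv inE yU andbT /ind.
  case: (eqVneq y v) => [->|yv] /=; first by rewrite eirr; ring.
  by case: (e v y) => /=; ring.
rewrite E !big_split /= /degU.
rewrite (eq_bigr (fun y => if y \in Uv U v then 1 else 0)) // sum_ind.
rewrite (eq_bigr (fun y => if y \in [set v] then 1 else 0)) // sum_ind.
rewrite (finset.setIidPr (Uv_sub U v)) (finset.setIidPr _); last by rewrite finset.sub1set.
by rewrite cards1; ring.
Qed.

Lemma sum_subI W U (F : T -> R) : W \subset U ->
  \sum_(x in W) F x = \sum_(x in U) ind (x \in W) * F x.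
Proof.
move=> WU; rewrite (@sum_sub R T _ _ F WU); apply: eq_bigr => x _.
by rewrite /ind; case: (x \in W); ring.
Qed.

Lemma DU_Uv U v : tfree U -> v \in U ->
  DU (Uv U v) + 2 * \sum_(u in U) ind (e v u) * degU U u <= DU U.
Proof.
move=> tU vU.
have E1 : DU (Uv U v) = \sum_(x in U) \sum_(y in U)
     (ind (x \in Uv U v) * ind (y \in Uv U v) * ind (e x y)).
  rewrite /DU (@sum_subI _ U _ (Uv_sub U v)); apply: eq_bigr => x _.
  rewrite /degU (@sum_subI _ U _ (Uv_sub U v)) mulr_sumr; apply: eq_bigr => y _.
  by ring.
have E2 : 2 * \sum_(u in U) ind (e v u) * degU U u =
   \sum_(x in U) \sum_(y in U) ((ind (e v x) + ind (e v y)) * ind (e x y)).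
  have Ea : \sum_(u in U) ind (e v u) * degU U u =
     \sum_(x in U) \sum_(y in U) (ind (e v x) * ind (e x y)).
    by apply: eq_bigr => x _; rewrite /degU mulr_sumr.
  have Eb : \sum_(u in U) ind (e v u) * degU U u =
     \sum_(x in U) \sum_(y in U) (ind (e v y) * ind (e x y)).
    rewrite exchange_big /=; apply: eq_bigr => y _; rewrite /degU mulr_sumr.
    by apply: eq_bigr => x _; rewrite (esym y x).
  have H2 : forall X : R, 2 * X = X + X by move=> X; ring.
  rewrite H2.
  rewrite {1}Ea Eb -big_split /=.
  apply: eq_bigr => x _; rewrite -big_split /=; apply: eq_bigr => y _; ring.
rewrite E1 E2 -big_split /=; apply: ler_sum => x xU.
rewrite -big_split /=; apply: ler_sum => y yU.
rewrite !in_Uv xU yU /ind !andbT.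
case exy: (e x y); last by case: (_ && _); case: (_ && _); case: (e v x); case: (e v y); rewrite /=; lra.
case evx: (e v x); case evy: (e v y) => /=.
- by exfalso; apply: (tU v x y).
- by case: (_ != _); rewrite /=; lra.
- by case: (_ != _); rewrite /= ?andbF; lra.
- by case: (_ != _); case: (_ != _); rewrite /=; lra.
Qed.

Lemma sum_deg2 U : \sum_(v in U) \sum_(u in U) ind (e v u) * degU U u =
  \sum_(u in U) degU U u ^+ 2.
Proof.
rewrite exchange_big /=; apply: eq_bigr => u _.
rewrite -mulr_suml expr2; congr (_ * _).
by rewrite /degU; apply: eq_bigr => v _; rewrite esym.
Qed.

End Shearer.

Lemma sum_lin (R : realType) (T : finType) (U : {set T}) (a b c : R) (X Y : T -> R) :
  \sum_(v in U) (a + b * X v + c * Y v) =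
  a * #|U|%:R + b * \sum_(v in U) X v + c * \sum_(v in U) Y v.
Proof.
by rewrite !big_split /= -!mulr_sumr sumr_const mulr_natr.
Qed.

Section ShearerMain.
Variables (R : realType) (T : finType) (e : rel T).
Hypotheses (esym : symmetric e) (eirr : irreflexive e).
Variables (f s : R -> R).
Hypothesis hA : forall x y, 0 <= x -> 0 < y -> f y + s y * (x - y) <= f x.
Hypothesis hB : forall y, 0 < y -> s y <= 0.
Hypothesis hC : forall y, 0 < y -> 0 <= 1 - (y + 1) * f y + (y - y ^+ 2) * s y.
Hypothesis hD : f 0 <= 1.

Definition Pgood (U : {set T}) := exists I : {set T},
  [/\ I \subset U, independent e I & #|U|%:R * f (DU R e U / #|U|%:R) <= #|I|%:R].

Lemma tangent_card (W : {set T}) (y : R) : 0 < y ->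
  #|W|%:R * f y + s y * (DU R e W - y * #|W|%:R) <= #|W|%:R * f (DU R e W / #|W|%:R).
Proof.
move=> yp.
have [W0|Wn0] := eqVneq #|W| 0%N.
  have -> : W = finset.set0 by apply/eqP; rewrite -cards_eq0 W0.
  by rewrite cards0 /DU big_set0 !mul0r mulr0 subr0 mulr0 addr0.
have Np : (0:R) < #|W|%:R by rewrite ltr0n lt0n.
have x0 : 0 <= DU R e W / #|W|%:R by rewrite divr_ge0 ?(DU_ge0 R e W) ?ltW.
have H := hA x0 yp.
have H2 := ler_wpM2l (ltW Np) H.
apply: le_trans H2; rewrite le_eqVlt; apply/orP; left; apply/eqP.
by field; rewrite lt0r_neq0.
Qed.

Lemma indep_all0 (U : {set T}) : DU R e U = 0 -> independent e U.
Proof.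
move=> D0.
have h1 := psumr_eq0P (fun x _ => deg_ge0 R e U x) D0.
apply/forallP => x; apply/implyP => xU; apply/forallP => y; apply/implyP => yU.
have h2 := psumr_eq0P (fun y _ => ind_ge0 R (e x y)) (h1 x xU).
apply/negP => exy; have := h2 y yU; rewrite /ind exy => /eqP.
by rewrite oner_eq0.
Qed.

Lemma step (U : {set T}) :
  (forall W : {set T}, (#|W| < #|U|)%N -> tfree e W -> Pgood W) -> tfree e U -> Pgood U.
Proof.
move=> IH tU.
have [D0|Dn0] := eqVneq (DU R e U) 0.
  exists U; split => //; first exact: indep_all0.
  rewrite D0 mul0r -[X in _ <= X]mulr1; apply: ler_wpM2l => //; exact: ler0n.
have Dp : 0 < DU R e U by rewrite lt_def Dn0 DU_ge0.
have Ugt0 : (0 < #|U|)%N.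
  rewrite lt0n; apply/negP => /eqP U0; move: Dn0.
  have -> : U = finset.set0 by apply/eqP; rewrite -cards_eq0 U0.
  by rewrite /DU big_set0 eqxx.
have [v0 v0U] := card_gt0P Ugt0.
set N : R := #|U|%:R.
have Np : 0 < N by rewrite /N ltr0n.
set D := DU R e U.
set yb := D / N.
have ybp : 0 < yb by rewrite divr_gt0.
set g := fun v => 1 + #|Uv e U v|%:R * f (DU R e (Uv e U v) / #|Uv e U v|%:R).
set fy := f yb.
set sy := s yb.
have syle : sy <= 0 by apply: hB.
have Cy := hC ybp.
set Nv := fun v => (#|Uv e U v|%:R : R).
set DUv := fun v => DU R e (Uv e U v).
have Hv : forall v, v \in U -> 1 + (fy - sy * yb) * Nv v + sy * DUv v <= g v.
  move=> v vU; have := tangent_card (Uv e U v) ybp.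
  rewrite /g /Nv /DUv -/fy -/sy; lra.
set Y := fun v => \sum_(u in U) ind R (e v u) * degU R e U u.
set Q2 := \sum_(u in U) degU R e U u ^+ 2.
have SN : \sum_(v in U) Nv v = (N - 1) * N - D.
  rewrite (eq_bigr (fun v => (N - 1) + (-1) * degU R e U v + 0 * degU R e U v)); last first.
    by move=> v vU; rewrite /Nv Uv_cardR // -/N; ring.
  by rewrite sum_lin -/N /D /DU; ring.
have SD : \sum_(v in U) DUv v <= D * N - 2 * Q2.
  apply: le_trans (_ : \sum_(v in U) (D + (-2) * Y v + 0 * Y v) <= _).
    apply: ler_sum => v vU; have := DU_Uv R esym tU vU; rewrite /DUv /Y -/D; lra.
  by rewrite sum_lin /Y sum_deg2 // -/Q2 -/N; lra.
have CS : D ^+ 2 <= N * Q2 by rewrite /D /DU /N /Q2; apply: cs_ineq.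
have Sg : N * (N * fy) <= \sum_(v in U) g v.
  apply: (@le_trans _ _ (\sum_(v in U) (1 + (fy - sy * yb) * Nv v + sy * DUv v))); last first.
    by apply: ler_sum.
  rewrite sum_lin SN -/N.
  set SDv := \sum_(v in U) DUv v.
  rewrite -/SDv in SD.
  have hDy : D = yb * N by rewrite /yb; field; rewrite lt0r_neq0.
  have Q2ge : yb ^+ 2 * N <= Q2.
    rewrite -(ler_pM2l Np); apply: le_trans CS; rewrite hDy.
    by rewrite (_ : (yb * N) ^+ 2 = N * (yb ^+ 2 * N)) //; ring.
  have P1 : 0 <= sy * (SDv - (D * N - 2 * Q2)) by apply: mulr_le0; lra.
  have P2 : sy * (Q2 - yb ^+ 2 * N) <= 0 by apply: mulr_le0_ge0; lra.
  have P3 : 0 <= N * (1 - (yb + 1) * fy + (yb - yb ^+ 2) * sy) by apply: mulr_ge0; [lra | exact: Cy].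
  rewrite hDy in P1 *.
  lra.
have [vm vmU Hmax] := @arg_maxP _ R T v0 (fun v => v \in U) g v0U.
have gvm : N * fy <= g vm.
  have : \sum_(v in U) g v <= N * g vm.
    apply: le_trans (_ : \sum_(v in U) g vm <= _).
      by apply: ler_sum => v vU; apply: Hmax.
    by rewrite sumr_const mulr_natl.
  move=> H; have := le_trans Sg H; rewrite ler_pM2l //.
have [Iv [IvU indIv cardIv]] := IH _ (Uv_card e vmU) (tfree_sub (Uv_sub e U vm) tU).
exists (vm |: Iv); split.
- rewrite finset.subUset finset.sub1set vmU /=; apply: fintype.subset_trans IvU _; exact: Uv_sub.
- apply/forallP => x; apply/implyP => xI; apply/forallP => y; apply/implyP => yI.
  have vmIv : vm \notin Iv.
    apply/negP => /(fintype.subsetP IvU); rewrite in_Uv eqxx //.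
  move: xI yI; rewrite !in_setU1 => /predU1P[->|xIv] /predU1P[->|yIv].
  + by rewrite eirr.
  + have := fintype.subsetP IvU y yIv; rewrite in_Uv => /and3P[_ ? _] //.
  + have := fintype.subsetP IvU x xIv; rewrite in_Uv esym => /and3P[_ ? _] //.
  + by have := forallP indIv x; rewrite xIv /= => /forallP /(_ y); rewrite yIv.
- have vmIv : vm \notin Iv.
    apply/negP => /(fintype.subsetP IvU); rewrite in_Uv eqxx //.
  rewrite cardsU1 vmIv natrD /=.
  change (N * fy <= 1%:R + #|Iv|%:R).
  rewrite /g in gvm; lra.
Qed.

Lemma shearer_main (U : {set T}) : tfree e U -> Pgood U.
Proof.
suff H : forall n (U : {set T}), (#|U| <= n)%N -> tfree e U -> Pgood U.
  by apply: (H #|U|).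
elim=> [|n IHn] W hn tW; apply: step => // V hV tV.
  by move: hn; rewrite leqn0 => /eqP h; move: hV; rewrite h.
by apply: IHn => //; rewrite -ltnS (leq_trans hV).
Qed.
End ShearerMain.
Section Sampling.
Variables (R : realType) (T : finType).
Definition wt (p : R) (S : {set T}) : R := \prod_(i : T) (if i \in S then p else 1 - p).

Lemma wt_ge0 p S : 0 <= p <= 1 -> 0 <= wt p S.
Proof.
move=> /andP[p0 p1]; apply: prodr_ge0 => i _; case: (i \in S) => //; lra.
Qed.

Lemma wt_sub p (A : {set T}) :
  \sum_(S : {set T}) wt p S * ind R (A \subset S) = p ^+ #|A|.
Proof.
transitivity (\prod_(i : T) (p + (if i \in A then 0 else 1 - p))); last first.
  rewrite -prodr_const (big_mkcond (fun i => i \in A)) /=.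
  by apply: eq_bigr => i _; case: (i \in A); rewrite ?addr0 ?subrKC.
rewrite bigA_distr; apply: eq_bigr => S _.
case: (boolP (A \subset S)) => AS.
  rewrite /ind mulr1 /wt; apply: eq_bigr => i _.
  case iS: (i \in S) => //; case iA: (i \in A) => //.
  by move: (fintype.subsetP AS i iA); rewrite iS.
have [i iA iS] := subsetPn AS.
rewrite /ind mulr0 (bigD1 i) //= (negbTE iS) iA mul0r //.
Qed.

Lemma wt_sum1 p : \sum_(S : {set T}) wt p S = 1.
Proof.
rewrite -(expr0 p) -(cards0 T) -(wt_sub p finset.set0); apply: eq_bigr => S _.
by rewrite finset.sub0set /ind mulr1.
Qed.

Lemma card_ind (S : {set T}) : (#|S|%:R : R) = \sum_(x : T) ind R ([set x] \subset S).
Proof.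
rewrite card_R (big_mkcond (fun x => x \in S)) /=; apply: eq_bigr => x _.
by rewrite finset.sub1set.
Qed.

Lemma E_card p : \sum_(S : {set T}) wt p S * #|S|%:R = p * #|T|%:R.
Proof.
under eq_bigr => S _ do rewrite card_ind mulr_sumr.
rewrite exchange_big /=.
under eq_bigr => x _ do rewrite wt_sub cards1 expr1.
by rewrite sumr_const mulr_natr.
Qed.

Lemma DU_pair (e : rel T) (S : {set T}) :
  DU R e S = \sum_(x : T) \sum_(y : T) ind R ([set x; y] \subset S) * ind R (e x y).
Proof.
rewrite /DU (big_mkcond (fun x => x \in S)) /=; apply: eq_bigr => x _.
rewrite /degU; case xS: (x \in S).
  rewrite (big_mkcond (fun y => y \in S)) /=; apply: eq_bigr => y _.
  by rewrite finset.subUset !finset.sub1set xS /ind; case: (y \in S); case: (e x y); rewrite /= ?mulr1 ?mul1r ?mul0r.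
by rewrite big1 // => y _; rewrite finset.subUset !finset.sub1set xS /ind mul0r.
Qed.

Lemma E_DU p (e : rel T) : irreflexive e ->
  \sum_(S : {set T}) wt p S * DU R e S =
  p ^+ 2 * \sum_(x : T) \sum_(y : T) ind R (e x y).
Proof.
move=> eirr.
under eq_bigr => S _ do rewrite DU_pair mulr_sumr.
rewrite exchange_big /= mulr_sumr; apply: eq_bigr => x _.
under eq_bigr => S _ do rewrite mulr_sumr.
rewrite exchange_big /= mulr_sumr; apply: eq_bigr => y _.
under eq_bigr => S _ do rewrite mulrA.
rewrite -mulr_suml wt_sub.
case exy: (e x y); last by rewrite /ind !mulr0.
have xy : x != y by apply/eqP => xy; rewrite xy eirr in exy.
by rewrite cards2 xy.
Qed.

Definition Tri (e : rel T) := [set S : {set T} | (#|S| == 3)%N &&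
   [forall x in S, forall y in S, (x != y) ==> e x y]].

Lemma num_tri e : num_triangles e = #|Tri e|.
Proof. by []. Qed.

Definition tS (e : rel T) (S : {set T}) : R := \sum_(D in Tri e) ind R (D \subset S).

Lemma E_tS p e : \sum_(S : {set T}) wt p S * tS e S = p ^+ 3 * (num_triangles e)%:R.
Proof.
under eq_bigr => S _ do rewrite /tS mulr_sumr.
rewrite exchange_big /= num_tri -sumr_const mulr_sumr; apply: eq_bigr => D DT.
rewrite wt_sub mulr1; move: DT; rewrite inE => /andP[/eqP -> _] //.
Qed.

Lemma tS_card e S : tS e S = #|[set D in Tri e | D \subset S]|%:R.
Proof.
rewrite /tS /ind -big_mkcondr /= (eq_bigl (fun D => D \in [set D in Tri e | D \subset S])).
  by rewrite sumr_const.
by move=> D; rewrite inE.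
Qed.
End Sampling.

Section Delete.
Variables (R : realType) (T : finType) (e : rel T).
Hypotheses (esym : symmetric e) (eirr : irreflexive e).

Lemma tri_in (x y z : T) : e x y -> e y z -> e x z -> [set x; y; z] \in Tri e.
Proof.
move=> exy eyz exz.
have xy : x != y by apply/eqP => h; rewrite h eirr in exy.
have yz : y != z by apply/eqP => h; rewrite h eirr in eyz.
have xz : x != z by apply/eqP => h; rewrite h eirr in exz.
rewrite inE; apply/andP; split.
  have -> : [set x; y; z] = x |: [set y; z].
    by apply/setP => w; rewrite !inE orbA.
  by rewrite cardsU1 cards2 !inE negb_or xy xz yz.
apply/forallP => a; apply/implyP; rewrite !inE => /orP[/orP[]|] /eqP ->;
apply/forallP => b; apply/implyP; rewrite !inE => /orP[/orP[]|] /eqP -> //=;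
by rewrite ?eqxx //= ?(esym y x) ?(esym z x) ?(esym z y) ?exy ?eyz ?exz ?implybT.
Qed.


Lemma delete (S : {set T}) : exists S' : {set T},
  [/\ S' \subset S, tfree e S' & #|S|%:R - tS R e S <= #|S'|%:R].
Proof.
set TS := [set D in Tri e | D \subset S].
set Img := [set [pick y in D] | D : {set T} in TS].
set Rm := [set x | Some x \in Img].
exists (S :\: Rm); split.
- exact: subsetDl.
- move=> x y z; rewrite !inE => /andP[xR xS] /andP[yR yS] /andP[zR zS] exy eyz exz.
  have DT : [set x; y; z] \in TS.
    rewrite inE tri_in //=; apply/fintype.subsetP => w; rewrite !inE.
    by move=> /orP[/orP[]|] /eqP ->.
  have := imset_f (fun D : {set T} => [pick y in D]) DT; rewrite -/Img.
  case: pickP => [w wD|H]; last by have := H x; rewrite !inE eqxx.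
  move=> wI.
  move: wD; rewrite !inE => /orP[/orP[]|] /eqP wE; rewrite wE in wI.
  + by rewrite wI in xR.
  + by rewrite wI in yR.
  + by rewrite wI in zR.
- rewrite tS_card -/TS lerBlDr -natrD ler_nat.
  have h1 : (#|Rm| <= #|Img|)%N.
    rewrite -(card_imset Rm (@Some_inj _)); apply: subset_leq_card.
    by apply/fintype.subsetP => o /imsetP[x]; rewrite inE => xI ->.
  have h2 : (#|Img| <= #|TS|)%N by apply: leq_imset_card.
  have h3 : (#|S :&: Rm| <= #|Rm|)%N by apply: subset_leq_card; apply: subsetIr.
  rewrite -(cardsID Rm S); lia.
Qed.

Lemma DU_mono (W U : {set T}) : W \subset U -> DU R e W <= DU R e U.
Proof.
move=> WU; rewrite !DU_pair; apply: ler_sum => x _; apply: ler_sum => y _.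
apply: ler_wpM2r; first exact: ind_ge0.
rewrite /ind; case: (boolP ([set x; y] \subset W)) => h //.
by rewrite (fintype.subset_trans h WU).
case: (_ \subset U) => //; lra.
Qed.

Definition E2 := [set S : {set T} | (#|S| == 2)%N &&
   [forall x in S, forall y in S, (x != y) ==> e x y]].

Lemma num_ed : num_edges e = #|E2|.
Proof. by []. Qed.

Lemma pairs_le : (#|[set p : T * T | e p.1 p.2]| <= 2 * num_edges e)%N.
Proof.
rewrite num_ed -sum1_card.
rewrite (partition_big (fun p : T * T => [set p.1; p.2]) (fun S => S \in E2)) /=; last first.
  case=> a b; rewrite inE /= => eab.
  have ab : a != b by apply/eqP => h; rewrite h eirr in eab.
  rewrite inE cards2 ab /=.
  apply/forallP => u; apply/implyP; rewrite !inE => /orP[] /eqP ->;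
  apply/forallP => v; apply/implyP; rewrite !inE => /orP[] /eqP -> //=;
  by rewrite ?eqxx //= ?eab ?(esym b a) ?eab ?implybT.
rewrite mulnC -sum_nat_const; apply: leq_sum => S; rewrite inE => /andP[/cards2P[a [b [ab ->]]] _].
rewrite sum1_card.
apply: leq_trans (_ : #|[set (a, b); (b, a)]| <= 2)%N; last by rewrite cards2; case: (_ != _).
apply: subset_leq_card; apply/fintype.subsetP => [[u v]]; rewrite !inE /= => /andP[euv /eqP E].
rewrite inE /= in euv.
have uv : u != v by apply/eqP => h; rewrite h eirr in euv.
have : u \in [set a; b] by rewrite -E !inE eqxx.
have : v \in [set a; b] by rewrite -E !inE eqxx orbT.
rewrite !inE => /orP[] /eqP hv /orP[] /eqP hu; subst; rewrite ?eqxx ?orbT //.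
- by rewrite eqxx in uv.
- by rewrite eqxx in uv.
Qed.

Lemma sum_pairs_le : \sum_(x : T) \sum_(y : T) ind R (e x y) <= 2 * (num_edges e)%:R.
Proof.
have -> : \sum_(x : T) \sum_(y : T) ind R (e x y) = #|[set p : T * T | e p.1 p.2]|%:R.
  rewrite pair_bigA /= /ind -(big_mkcond (fun p : T * T => e p.1 p.2)) /=.
  rewrite (eq_bigl (fun p => p \in [set p : T * T | e p.1 p.2])); last by move=> p; rewrite inE.
  by rewrite sumr_const.
by rewrite -natrM ler_nat pairs_le.
Qed.

Lemma indep_alpha (I : {set T}) : independent e I -> (#|I| <= alpha e)%N.
Proof. by move=> h; rewrite /alpha; apply: (@leq_bigmax_cond _ (fun S => independent e S) (fun S => #|S|) I h). Qed.
End Delete.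
Section Final.
Variable R : realType.
Variable eps : R.
Hypothesis epsp : 0 < eps.
Definition aa : R := 1 + 4 / eps.
Definition kap : R := aa / (aa + 2).
Definition ff (y : R) : R := kap * Fl (y / aa) / aa.
Definition ss (y : R) : R := kap * Gl (y / aa) / aa ^+ 2.

Lemma aa_ge1 : 1 <= aa.
Proof. by rewrite /aa lerDl divr_ge0 // ltW. Qed.
Lemma aa_gt0 : 0 < aa.
Proof. by have := aa_ge1; lra. Qed.
Lemma kap_ge0 : 0 <= kap.
Proof. by rewrite /kap divr_ge0 //; have := aa_ge1; lra. Qed.

Lemma hA x y : 0 <= x -> 0 < y -> ff y + ss y * (x - y) <= ff x.
Proof.
move=> x0 y0.
have a0 := aa_gt0.
have := @tangentF R (x / aa) (y / aa) (divr_ge0 x0 (ltW a0)) (divr_gt0 y0 a0).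
move=> H.
have H2 := ler_wpM2l (divr_ge0 kap_ge0 (ltW a0)) H.
have E1 : ff y + ss y * (x - y) = kap / aa * (Fl (y / aa) + Gl (y / aa) * (x / aa - y / aa)).
  by rewrite /ff /ss; field; rewrite lt0r_neq0.
have E2 : ff x = kap / aa * Fl (x / aa) by rewrite /ff; field; rewrite lt0r_neq0.
by rewrite E1 E2.
Qed.

Lemma hB y : 0 < y -> ss y <= 0.
Proof.
move=> y0; rewrite /ss; apply: mulr_le0_ge0; last by rewrite invr_ge0 exprn_ge0 // ltW // aa_gt0.
apply: mulr_ge0_le0; first exact: kap_ge0.
by apply: Gl_le0; rewrite divr_gt0 // aa_gt0.
Qed.

Lemma hC y : 0 < y -> 0 <= 1 - (y + 1) * ff y + (y - y ^+ 2) * ss y.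
Proof.
move=> y0.
have a0 := aa_gt0.
set z := y / aa.
have z0 : 0 < z by rewrite divr_gt0.
have hy : y = aa * z by rewrite /z; field; rewrite lt0r_neq0.
have hG : Gl z = ((z + 1)^-1 - Fl z) / z.
  by have := FG_id z0; move=> h; rewrite -h; field; rewrite lt0r_neq0.
have F1 : Fl z <= 1 by apply: Fl_le1; rewrite ltW.
rewrite /ff /ss -/z hG hy.
have -> : 1 - (aa * z + 1) * (kap * Fl z / aa) + (aa * z - (aa * z) ^+ 2) * (kap * (((z + 1)^-1 - Fl z) / z) / aa ^+ 2)
   = kap / (z + 1) + 2 * kap * (1 - Fl z) / aa + kap / ((z + 1) * aa) + (1 - kap - 2 * kap / aa).
  by field; rewrite !lt0r_neq0 //; lra.
have -> : 1 - kap - 2 * kap / aa = 0 by rewrite /kap; field; rewrite !lt0r_neq0 //; lra.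
have k0 := kap_ge0.
rewrite addr0; apply: addr_ge0; [apply: addr_ge0|].
- by apply: divr_ge0 => //; lra.
- by apply: divr_ge0; [apply: mulr_ge0; [lra|lra] | lra].
- by apply: divr_ge0 => //; apply: mulr_ge0; lra.
Qed.

Lemma hD : ff 0 <= 1.
Proof.
have a0 := aa_gt0.
rewrite /ff mul0r /Fl eqxx mulr1 /kap ler_pdivrMr // mul1r ler_pdivrMr; last lra.
nra.
Qed.

Lemma kap_le1 : kap <= 1.
Proof. have a0 := aa_gt0; rewrite /kap ler_pdivrMr; lra. Qed.

Lemma kap_ge : 1 - eps / 2 <= kap.
Proof.
have a0 := aa_gt0.
have -> : kap = 1 - 2 * eps / (3 * eps + 4).
  rewrite /kap /aa; field; apply/andP; split; rewrite lt0r_neq0 //.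
  by rewrite addr_gt0 // mulr_gt0.
rewrite lerD2l lerN2 ler_pdivrMr; last first.
  by rewrite addr_gt0 // mulr_gt0.
have : 0 <= eps * eps by nra.
lra.
Qed.

Lemma fbound lam : 1 <= lam -> 2 * (ln aa + 2 / aa) / eps <= ln lam ->
  (1 - eps) * ln lam <= (lam - 1) * ff lam + lam * ss lam.
Proof.
move=> l1 hl.
have a0 := aa_gt0.
have l0 : 0 < lam by lra.
set z := lam / aa.
have z0 : 0 < z by rewrite divr_gt0.
have hy : lam = aa * z by rewrite /z; field; rewrite lt0r_neq0.
have hG : Gl z = ((z + 1)^-1 - Fl z) / z.
  by have := FG_id z0; move=> h; rewrite -h; field; rewrite lt0r_neq0.
have F1 : Fl z <= 1 by apply: Fl_le1; rewrite ltW.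
have hF : z * Fl z = ln (z + 1) by rewrite Fl_pos //; field; rewrite lt0r_neq0.
have E : (lam - 1) * ff lam + lam * ss lam = kap * (z * Fl z + ((z + 1)^-1 - 2 * Fl z) / aa).
  rewrite /ff /ss -/z hG hy; field.
  by rewrite !lt0r_neq0 // addr_gt0.
rewrite E hF.
have Lz : ln lam - ln aa <= ln (z + 1).
  rewrite -ln_div ?posrE // -/z ler_ln ?posrE //; lra.
have K0 : 0 <= ln aa by apply: ln_ge0; exact: aa_ge1.
have i1 : 0 <= (z + 1)^-1 / aa by apply: divr_ge0; [rewrite invr_ge0; lra | lra].
have k0 := kap_ge0.
have k1 := kap_le1.
have k2 := kap_ge.
have ln0 : 0 <= ln lam by apply: ln_ge0.
have Ka : 0 <= 2 / aa by rewrite divr_ge0 //; lra.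
have hl2 : 2 * (ln aa + 2 / aa) <= eps * ln lam.
  by move: hl; rewrite ler_pdivrMr // => h; lra.
have step1 : kap * (ln lam - ln aa - 2 / aa) <= kap * (ln (z + 1) + ((z + 1)^-1 - 2 * Fl z) / aa).
  apply: ler_wpM2l => //.
  have : 2 * Fl z / aa <= 2 / aa by rewrite ler_pM2r ?invr_gt0 //; lra.
  have -> : ((z + 1)^-1 - 2 * Fl z) / aa = (z + 1)^-1 / aa - 2 * Fl z / aa by field; rewrite lt0r_neq0 //; lra.
  lra.
apply: le_trans step1.
nra.
Qed.
End Final.

Unset Implicit Arguments.
Local Open Scope classical_set_scope.
Local Open Scope ring_scope.

Theorem lemma5p2 (R : realType) (lam : R -> R)
  (hle : forall d, lam d <= d)
  (hinf : lam x @[x --> +oo] --> +oo) :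
  forall eps : R, 0 < eps ->
  exists d0 : R, forall d : R, d0 <= d ->
  forall (T : finType) (e : rel T), simple_graph e ->
    (2 * num_edges e)%:R <= d * #|T|%:R ->
    (num_triangles e)%:R <= d ^+ 2 * #|T|%:R / lam d ^+ 3 ->
    (1 - eps) * (#|T|%:R * ln (lam d) / d) <= (alpha e)%:R.
Proof.
move=> eps epsp.
set K := ln (aa eps) + 2 / aa eps.
set A := Num.max 1 (expR (2 * K / eps)).
have [M HM] : exists M : R, forall x, M < x -> A <= lam x.
  by move/cvgryPge: hinf => /(_ A) [M [_ HM]]; exists M.
exists (M + 1) => d Md T e [esym eirr] hE hT.
have hl : A <= lam d by apply: HM; lra.
set lm := lam d in hl hT *.
have l1 : 1 <= lm by move: hl; rewrite ge_max => /andP[].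
have l2 : expR (2 * K / eps) <= lm by move: hl; rewrite ge_max => /andP[].
have lm0 : 0 < lm by lra.
have lnl : 2 * K / eps <= ln lm.
  by rewrite -ler_expR lnK ?posrE.
have dl : lm <= d by apply: hle.
have d0 : 0 < d by lra.
set p := lm / d.
have p0 : 0 < p by rewrite divr_gt0.
have p1 : p <= 1 by rewrite ler_pdivrMr // mul1r.
set f := ff eps; set s := ss eps.
have sl : s lm <= 0 by apply: hB.
have fl : 0 < f lm.
  rewrite /f /ff; apply: divr_gt0; last exact: aa_gt0.
  apply: mulr_gt0; first by rewrite /kap divr_gt0 //; have := aa_gt0 epsp; lra.
  by apply: Fl_gt0; rewrite divr_gt0 // aa_gt0.
set c := f lm - s lm * lm.
have c0 : 0 <= c by rewrite /c; nra.
set n : R := #|T|%:R.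
have n0 : 0 <= n by rewrite /n ler0n.
set P := \sum_(x : T) \sum_(y : T) ind R (e x y).
set T3 : R := (num_triangles e)%:R.
set X := fun S : {set T} => c * (#|S|%:R - tS R e S) + s lm * DU R e S.
have EX : \sum_(S : {set T}) wt p S * X S = c * (p * n - p ^+ 3 * T3) + s lm * (p ^+ 2 * P).
  rewrite /X.
  rewrite (eq_bigr (fun S => c * (wt p S * #|S|%:R) - c * (wt p S * tS R e S) + s lm * (wt p S * DU R e S))); last by move=> S _; ring.
  rewrite !big_split /= sumrN -!mulr_sumr E_card E_tS E_DU //.
  by rewrite /n /T3 /P; ring.
have [Sm _ Hmax] := @arg_maxP _ R {set T} finset.set0 xpredT X isT.
have EXm : \sum_(S : {set T}) wt p S * X S <= X Sm.
  apply: le_trans (_ : \sum_(S : {set T}) wt p S * X Sm <= _).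
    apply: ler_sum => S _; apply: ler_wpM2l; first by apply: wt_ge0; rewrite ltW.
    exact: Hmax.
  by rewrite -mulr_suml wt_sum1 mul1r.
have [S' [S'sub tS' cardS']] := delete R esym eirr Sm.
have [I [IS' indI cardI]] := shearer_main esym eirr (hA epsp) (hB epsp) (hC epsp) (hD epsp) tS'.
have tg := tangent_card e (hA epsp) S' lm0.
have DUm := DU_mono R e S'sub.
have XI : X Sm <= #|I|%:R.
  apply: le_trans cardI; apply: le_trans tg.
  rewrite /X.
  have h1 : c * (#|Sm|%:R - tS R e Sm) <= c * #|S'|%:R by apply: ler_wpM2l.
  have h2 : s lm * DU R e Sm <= s lm * DU R e S' by apply: ler_wnM2l.
  rewrite -/f -/s; move: h1 h2; rewrite /c; lra.
have alphaI : (#|I|%:R : R) <= (alpha e)%:R by rewrite ler_nat indep_alpha.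
have hP : P <= d * n.
  apply: le_trans (sum_pairs_le R esym eirr) _.
  by move: hE; rewrite natrM.
have hpT : p ^+ 3 * T3 <= n / d.
  have h := ler_wpM2l (exprn_ge0 3 (ltW p0)) hT.
  apply: le_trans h _; rewrite le_eqVlt; apply/orP; left; apply/eqP.
  by rewrite /p /n; field; rewrite !lt0r_neq0.
have hcT : c * (p ^+ 3 * T3) <= c * (n / d) by apply: ler_wpM2l.
have hsP : s lm * (p ^+ 2 * (d * n)) <= s lm * (p ^+ 2 * P).
  by apply: ler_wnM2l => //; apply: ler_wpM2l => //; apply: exprn_ge0; rewrite ltW.
have Eid : c * (p * n) - c * (n / d) + s lm * (p ^+ 2 * (d * n)) =
   n / d * ((lm - 1) * f lm + lm * s lm).
  by rewrite /c /p; field; rewrite lt0r_neq0.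
have fb := fbound epsp l1 lnl.
have fb2 : n / d * ((1 - eps) * ln lm) <= n / d * ((lm - 1) * f lm + lm * s lm).
  by apply: ler_wpM2l => //; rewrite divr_ge0 // ltW.
have Gid : (1 - eps) * (n * ln lm / d) = n / d * ((1 - eps) * ln lm).
  by field; rewrite lt0r_neq0.
rewrite -/n Gid.
apply: le_trans fb2 _; rewrite -Eid.
apply: le_trans alphaI; apply: le_trans XI; apply: le_trans EXm; rewrite EX.
rewrite mulrBr.
lra.
Qed.
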